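(* Assume that $L_h$ is hyperregular, i.e. its Legendre transform $T\Lambda^k_h\to T^*\Lambda^k_h$, $(\varphi^i,\dot\varphi^i)\mapsto(\varphi^i,\pi_j)$ with $M_i^{\ j}\pi_j=\partial L_h/\partial\dot\varphi^i$, is a diffeomorphism. Then the dynamics of the Hamiltonian system $(\omega_h,H_h)$, namely $$M^j_{\ k}\dot\varphi^k=\frac{\partial H_h}{\partial\pi_j},\qquad M_j^{\ k}\dot\pi_k=-\frac{\partial H_h}{\partial\varphi^j},$$ are equivalent to the semi-discrete Euler--Lagrange equations $$\frac{d}{dt}(\partial_3\mathcal{L},v)_{L^2\Lambda^k(\Sigma)}-(\partial_2\mathcal{L},v)_{L^2\Lambda^k(\Sigma)}-(\partial_4\mathcal{L},dv)_{L^2\Lambda^{k+1}(\Sigma)}=0\quad\text{for all }v\in\Lambda^k_h,$$ with $\mathcal{L}$ evaluated at $(x^\mu,\varphi,\dot\varphi,d\varphi)$, $\varphi=\varphi^iv_i$.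
   Context: $\Sigma$ is a reference Cauchy surface of a spacetime $X\cong\mathbb{R}\times\Sigma$, $I$ an interval, $d$ the exterior derivative on $\Sigma$. $\Lambda^k_h\subset H\Lambda^k(\Sigma)$ is a finite element space with basis $\{v_i\}$, part of a subcomplex with cochain projections. The instantaneous Lagrangian density $\mathcal{L}(x^\mu,\varphi,\dot\varphi,d\varphi)$ is an $n$-form on $\Sigma$, with $\partial_2,\partial_3,\partial_4$ the $L^2$ Riesz representatives of its variations in $\varphi,\dot\varphi,d\varphi$. The semi-discrete Lagrangian is $L_h(t,\varphi^i,\dot\varphi^i)=\int_\Sigma\mathcal{L}(x^\mu,\varphi^iv_i,\dot\varphi^iv_i,\varphi^idv_i)$. $M$ is the mass matrix $M_i^{\ j}=(v_i,v_j)_{L^2}$, with $M_j^{\ k}$ denoting row $j$, column $k$ of $M$ and $M^j_{\ k}$ that of $M^T$. On $T^*\Lambda^k_h$ with coordinates $\varphi=\varphi^iv_i$, $\pi=\pi_iv^i$ ($v^i=(\cdot,v_i)_{L^2}$), $\omega_h=d\varphi^i\wedge M_i^{\ j}d\pi_j$. The semi-discrete Hamiltonian is $H_h(t,\varphi^i,\pi_i)=M_i^{\ j}\pi_j\dot\varphi^i-L_h(t,\varphi^i,\dot\varphi^i)$, with $\dot\varphi$ expressed via the inverse Legendre transform. *)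

(* Defs.v *)
From HB Require Import structures.
From mathcomp Require Import all_boot all_order all_algebra.
From mathcomp Require Import all_classical all_reals all_analysis.
Set Implicit Arguments. Unset Strict Implicit. Unset Printing Implicit Defensive.
Import Order.TTheory GRing.Theory Num.Theory.
Import numFieldNormedType.Exports.
Local Open Scope classical_set_scope.
Local Open Scope ring_scope.

(* Abstract setting: V models H Lambda^k(Sigma) with the L^2 inner product ipV,
   W models L^2 Lambda^(k+1)(Sigma) with ipW, d : V -> W the exterior derivative,
   v : 'I_N -> V the basis {v_i} of Lambda^k_h.
   Lint t phi phidot psi = \int_Sigma Lcal(x^mu, phi, phidot, psi)  (t = x^0). *)

Definition inner_product (R : realType) (V : lmodType R) (ip : V -> V -> R) :=
  [/\ (forall x y, ip x y = ip y x),
      (forall a x y z, ip (a *: x + y) z = a * ip x z + ip y z)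
    & (forall x, x != 0 -> 0 < ip x x)].

Definition lin_indep (R : realType) (V : lmodType R) (N : nat) (v : 'I_N -> V) :=
  forall c : 'rV[R]_N, \sum_(i < N) c 0 i *: v i = 0 -> c = 0.

Definition comb (R : realType) (V : lmodType R) (N : nat) (v : 'I_N -> V)
  (c : 'rV[R]_N) : V := \sum_(i < N) c 0 i *: v i.

Definition mass (R : realType) (V : lmodType R) (N : nat) (ipV : V -> V -> R)
  (v : 'I_N -> V) : 'M[R]_N := \matrix_(i, j) ipV (v i) (v j).

Definition Lh (R : realType) (V W : lmodType R) (N : nat)
  (Lint : R -> V -> V -> W -> R) (d : V -> W) (v : 'I_N -> V)
  (t : R) (phi phid : 'rV[R]_N) : R :=
  Lint t (comb v phi) (comb v phid) (\sum_(i < N) phi 0 i *: d (v i)).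

Definition pd (R : realType) (N : nat) (f : 'rV[R]_N -> R) (x : 'rV[R]_N)
  (i : 'I_N) : R := derive f x (delta_mx 0 i).

Definition momentum (R : realType) (V W : lmodType R) (N : nat)
  (ipV : V -> V -> R) (Lint : R -> V -> V -> W -> R) (d : V -> W)
  (v : 'I_N -> V) (t : R) (phi phid : 'rV[R]_N) : 'rV[R]_N :=
  (\row_i pd (Lh Lint d v t phi) phid i) *m invmx (mass ipV v)^T.

Definition legendre (R : realType) (V W : lmodType R) (N : nat)
  (ipV : V -> V -> R) (Lint : R -> V -> V -> W -> R) (d : V -> W)
  (v : 'I_N -> V) (t : R) (p : 'rV[R]_N * 'rV[R]_N) : 'rV[R]_N * 'rV[R]_N :=
  (p.1, momentum ipV Lint d v t p.1 p.2).

Definition diffeo (R : realType) (X : normedModType R)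
  (f g : X -> X) :=
  [/\ cancel f g, cancel g f,
      (forall x, differentiable f x) & (forall y, differentiable g y)].

(* semi-discrete Hamiltonian; vinv t phi pi is the velocity phidot given by
   the inverse Legendre transform *)
Definition Hh (R : realType) (V W : lmodType R) (N : nat)
  (ipV : V -> V -> R) (Lint : R -> V -> V -> W -> R) (d : V -> W)
  (v : 'I_N -> V) (vinv : R -> 'rV[R]_N -> 'rV[R]_N -> 'rV[R]_N)
  (t : R) (phi pi : 'rV[R]_N) : R :=
  let phid := vinv t phi pi in
  \sum_(i < N) (\sum_(j < N) mass ipV v i j * pi 0 j) * phid 0 i
  - Lh Lint d v t phi phid.

Definition hamilton_eqs (R : realType) (V W : lmodType R) (N : nat)
  (ipV : V -> V -> R) (Lint : R -> V -> V -> W -> R) (d : V -> W)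
  (v : 'I_N -> V) (vinv : R -> 'rV[R]_N -> 'rV[R]_N -> 'rV[R]_N)
  (I : set R) (phi pi : R -> 'rV[R]_N) :=
  forall t, I t ->
  [/\ derivable phi t 1, derivable pi t 1,
      (forall j, (derive1 phi t *m mass ipV v) 0 j
                 = pd (Hh ipV Lint d v vinv t (phi t)) (pi t) j)
    & (forall j, (derive1 pi t *m (mass ipV v)^T) 0 j
                 = - pd (fun x => Hh ipV Lint d v vinv t x (pi t)) (phi t) j)].

Definition euler_lagrange (R : realType) (V W : lmodType R) (N : nat)
  (ipV : V -> V -> R) (ipW : W -> W -> R)
  (d2 d3 : R -> V -> V -> W -> V) (d4 : R -> V -> V -> W -> W)
  (d : V -> W) (v : 'I_N -> V) (I : set R) (phi : R -> 'rV[R]_N) :=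
  forall t, I t ->
  derivable phi t 1 /\
  forall c : 'rV[R]_N,
    let w := comb v c in
    let args s := (comb v (phi s), comb v (derive1 phi s),
                   \sum_(i < N) phi s 0 i *: d (v i)) in
    is_derive t (1 : R)
      (fun s => ipV (d3 s (args s).1.1 (args s).1.2 (args s).2) w)
      (ipV (d2 t (args t).1.1 (args t).1.2 (args t).2) w
       + ipW (d4 t (args t).1.1 (args t).1.2 (args t).2) (d w)).

(* Main.v *)
Require Import Defs.
From HB Require Import structures.
From mathcomp Require Import all_boot all_order all_algebra.
From mathcomp Require Import all_classical all_reals all_analysis.
From mathcomp Require Import lra.
Import Order.TTheory GRing.Theory Num.Theory.
Import numFieldNormedType.Exports.
Local Open Scope ring_scope.

Module Helpers.
Set Implicit Arguments. Unset Strict Implicit. Unset Printing Implicit Defensive.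

Lemma derive_line (R : realType) (V W : normedModType R) (f : V -> W) x w :
  derive f x w = derive (fun h : R => f (h *: w + x)) 0 1.
Proof.
rewrite /derive; set g1 := fun h => h^-1 *: _; set g2 := fun h => h^-1 *: _.
suff -> : g1 = g2 by [].
by rewrite funeqE /g1 /g2 => h /=; rewrite addr0 scale0r add0r [_%:A]mulr1.
Qed.

Lemma derivable_line (R : realType) (V W : normedModType R) (f : V -> W) x w :
  derivable f x w <-> derivable (fun h : R => f (h *: w + x)) 0 1.
Proof. exact: derivable1P. Qed.

Section T.
Variables (R : realType) (U W : normedModType R).
Lemma snd_lin : linear (@snd U W). Proof. by move=> a x y. Qed.
Lemma fst_lin : linear (@fst U W). Proof. by move=> a x y. Qed.
Definition sndL : {linear (U * W)%type -> W} := HB.pack (@snd U W) (GRing.isLinear.Build _ _ _ _ _ snd_lin).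
Definition fstL : {linear (U * W)%type -> U} := HB.pack (@fst U W) (GRing.isLinear.Build _ _ _ _ _ fst_lin).
Lemma snd_cont : continuous (@snd U W).
Proof. move=> [a b]; exact: cvg_snd. Qed.
Lemma fst_cont : continuous (@fst U W).
Proof. move=> [a b]; exact: cvg_fst. Qed.
Lemma scp_pair (s : R) (a : U) (b : W) : s *: (a, b) = (s *: a, s *: b).
Proof. by []. Qed.
Lemma adp_pair (a a' : U) (b b' : W) : (a, b) + (a', b') = (a + a', b + b').
Proof. by []. Qed.
Lemma sum_pair n (F : 'I_n -> U) (G : 'I_n -> W) :
  \sum_(i < n) ((F i, G i) : (U * W)%type) = (\sum_(i < n) F i, \sum_(i < n) G i).
Proof.
elim: n F G => [|n ih] F G; first by rewrite !big_ord0.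
by rewrite !big_ord_recr /= ih.
Qed.
End T.

Section IP.
Variables (R : realType) (V : lmodType R) (ip : V -> V -> R).
Hypothesis hip : inner_product ip.

Lemma ip0l z : ip 0 z = 0.
Proof.
case: hip => _ hl _; have := hl 1 0 0 z.
rewrite scaler0 addr0 mul1r => h; lra.
Qed.

Lemma ip0r z : ip z 0 = 0.
Proof. by case: hip => hs _ _; rewrite hs ip0l. Qed.

Lemma ipDZr a x y z : ip z (a *: x + y) = a * ip z x + ip z y.
Proof. by case: hip => hs hl _; rewrite hs hl !(hs z). Qed.

Lemma ip_sumr n (c : 'I_n -> R) (w : 'I_n -> V) z :
  ip z (\sum_(i < n) c i *: w i) = \sum_(i < n) c i * ip z (w i).
Proof.
elim/big_rec2: _ => [|i y1 y2 _ <-]; first exact: ip0r.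
by rewrite ipDZr.
Qed.

Lemma mass_sym n (w : 'I_n -> V) : (mass ip w)^T = mass ip w.
Proof. by apply/matrixP => i j; rewrite !mxE; case: hip => hs _ _; rewrite hs. Qed.

Lemma mass_mul n (w : 'I_n -> V) (c : 'rV[R]_n) j :
  (c *m mass ip w) 0 j = ip (comb w c) (w j).
Proof.
rewrite mxE /comb; case: hip => hs _ _; rewrite hs ip_sumr.
by apply: eq_bigr => i _; rewrite mxE hs.
Qed.

Lemma mass_unit n (w : 'I_n -> V) : lin_indep w -> mass ip w \in unitmx.
Proof.
move=> li.
have key : forall c : 'rV[R]_n, c *m mass ip w = 0 -> c = 0.
  move=> c hc; apply: li.
  have h0 : ip (comb w c) (comb w c) = 0.
    rewrite {2}/comb ip_sumr big1 // => j _.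
    by rewrite -mass_mul hc mxE mulr0.
  apply/eqP; apply/negPn/negP => hn.
  by case: hip => _ _ hp; have := hp _ hn; rewrite /comb in h0 *; rewrite h0 ltxx.
rewrite -row_free_unit -kermx_eq0; apply/eqP/row_matrixP => i.
by rewrite row0; apply: key; rewrite -row_mul mulmx_ker row0.
Qed.
End IP.

Lemma comb_delta (R : realType) (V : lmodType R) n (w : 'I_n -> V) i :
  comb w (delta_mx 0 i) = w i.
Proof.
rewrite /comb (bigD1 i) //= mxE !eqxx scale1r big1 ?addr0 // => j /negbTE ji.
by rewrite mxE ji andbF scale0r.
Qed.

Lemma comb_lin (R : realType) (V : lmodType R) n (w : 'I_n -> V) a x y :
  comb w (a *: x + y) = a *: comb w x + comb w y.
Proof.
rewrite /comb scaler_sumr -big_split; apply: eq_bigr => i _.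
by rewrite !mxE scalerDl scalerA.
Qed.

Section Main.
Variables (R : realType) (V W : lmodType R) (N : nat)
  (ipV : V -> V -> R) (ipW : W -> W -> R) (d : {linear V -> W})
  (v : 'I_N -> V)
  (Lint : R -> V -> V -> W -> R)
  (d2 d3 : R -> V -> V -> W -> V) (d4 : R -> V -> V -> W -> W)
  (vinv : R -> 'rV[R]_N -> 'rV[R]_N -> 'rV[R]_N).
Hypothesis hV : inner_product ipV.
Hypothesis hW : inner_product ipW.
Hypothesis hriesz : forall t phi phid psi (a1 a2 : V) (a3 : W),
     is_derive (0 : R) (1 : R)
       (fun s => Lint t (phi + s *: a1) (phid + s *: a2) (psi + s *: a3))
       (ipV (d2 t phi phid psi) a1 + ipV (d3 t phi phid psi) a2
        + ipW (d4 t phi phid psi) a3).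

Local Notation dv := (fun j => d (v j)).

Lemma pd_phid t phi phid i :
  pd (Lh Lint d v t phi) phid i =
  ipV (d3 t (comb v phi) (comb v phid) (comb dv phi)) (v i).
Proof.
rewrite /pd derive_line.
have -> : (fun h : R => Lh Lint d v t phi (h *: delta_mx 0 i + phid)) =
  (fun s => Lint t (comb v phi + s *: 0) (comb v phid + s *: v i) (comb dv phi + s *: 0)).
  apply/funext => s; rewrite /Lh comb_lin comb_delta !scaler0 !addr0 addrC //.
by case: (hriesz t (comb v phi) (comb v phid) (comb dv phi) 0 (v i) 0) => _ ->;
  rewrite (ip0r hV) (ip0r hW) add0r addr0.
Qed.

Lemma pd_phi t phi phid i :
  pd (fun x => Lh Lint d v t x phid) phi i =
  ipV (d2 t (comb v phi) (comb v phid) (comb dv phi)) (v i)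
  + ipW (d4 t (comb v phi) (comb v phid) (comb dv phi)) (d (v i)).
Proof.
rewrite /pd derive_line.
have -> : (fun h : R => Lh Lint d v t (h *: delta_mx 0 i + phi) phid) =
  (fun s => Lint t (comb v phi + s *: v i) (comb v phid + s *: 0) (comb dv phi + s *: d (v i))).
  apply/funext => s; rewrite /Lh scaler0 addr0.
  have := comb_lin dv s (delta_mx 0 i) phi; rewrite /comb => ->.
  rewrite -/(comb dv _) -/(comb v _) comb_lin comb_delta.
  by rewrite (addrC (s *: v i)) (addrC (s *: _)) (comb_delta dv).
by case: (hriesz t (comb v phi) (comb v phid) (comb dv phi) (v i) 0 (d (v i))) => _ ->;
  rewrite (ip0r hV) addr0.
Qed.
End Main.

Section DK.
Variables (R : realType) (N : nat).
Local Notation X := ('rV[R]_N * 'rV[R]_N)%type.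

Lemma pi_lin (i : 'I_N) : linear (fun p : X => p.2 0 i).
Proof. by move=> a x y /=; rewrite !mxE. Qed.
Definition piL i : {linear X -> R} := HB.pack (fun p : X => p.2 0 i) (GRing.isLinear.Build _ _ _ _ _ (pi_lin i)).
Lemma piL_cont i : continuous (piL i).
Proof.
move=> p; apply: (@continuous_comp _ _ _ (@snd _ _) (fun m : 'rV[R]_N => m 0 i)).
  exact: snd_cont.
exact: coord_continuous.
Qed.

Lemma is_derive_pi (g : X -> X) q0 w i : differentiable g q0 ->
  is_derive q0 w (fun q => (g q).2 0 i) (('d g q0 w).2 0 i).
Proof.
move=> dg.
have dpi : differentiable (piL i) (g q0) by apply: linear_differentiable; exact: piL_cont.
have e : (fun q => (g q).2 0 i) = piL i \o g by [].
rewrite e; apply: DeriveDef; first by apply: diff_derivable; exact: differentiable_comp.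
rewrite deriveE; last exact: differentiable_comp.
by rewrite diff_comp // diff_lin //; exact: piL_cont.
Qed.

Lemma dK_alg (M : 'M[R]_N) (q0 w : X) (b0 : 'rV[R]_N) (dgw : X) (l : {linear X -> R}) :
  dgw.1 = w.1 -> (forall i, l (0, delta_mx 0 i) = \sum_j M i j * q0.2 0 j) ->
  \sum_i ((\sum_j M i j * q0.2 0 j) *: dgw.2 0 i + b0 0 i *: \sum_j M i j * w.2 0 j) - l dgw
  = \sum_i (\sum_j M i j * w.2 0 j) * b0 0 i - l (w.1, 0).
Proof.
move=> h1 hl.
have pe : dgw = (w.1, 0) + \sum_i dgw.2 0 i *: ((0 : 'rV[R]_N), (delta_mx 0 i : 'rV[R]_N)).
  have -> : \sum_i dgw.2 0 i *: ((0 : 'rV[R]_N), (delta_mx 0 i : 'rV[R]_N)) = (0, \sum_i dgw.2 0 i *: delta_mx 0 i).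
    transitivity (\sum_i (((0 : 'rV[R]_N), dgw.2 0 i *: delta_mx 0 i) : X)).
      by apply: eq_bigr => i _; rewrite scp_pair scaler0.
    by rewrite sum_pair big1.
  by rewrite -row_sum_delta adp_pair addr0 add0r -h1; case: dgw {h1}.
rewrite [in l dgw]pe linearD linear_sum /=.
have e2 : \sum_i l (dgw.2 0 i *: ((0 : 'rV[R]_N), (delta_mx 0 i : 'rV[R]_N)))
  = \sum_i dgw.2 0 i * \sum_j M i j * q0.2 0 j.
  by apply: eq_bigr => i _; rewrite linearZ /= hl.
rewrite e2.
rewrite opprD addrCA addrC; congr (_ + _).
rewrite -sumrB; apply: eq_bigr => i _ /=.
have sm : forall a b : R, a *: b = a * b by [].
rewrite !sm; lra.
Qed.

Lemma dK (M : 'M[R]_N) (Lf : X -> R) (g : X -> X) (q0 w : X) :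
  differentiable Lf (g q0) -> differentiable g q0 -> (forall q, (g q).1 = q.1) ->
  (forall i, derive Lf (g q0) (0, delta_mx 0 i) = \sum_j M i j * q0.2 0 j) ->
  derive (fun q : X => \sum_i (\sum_j M i j * q.2 0 j) * (g q).2 0 i - Lf (g q)) q0 w
   = \sum_i (\sum_j M i j * w.2 0 j) * (g q0).2 0 i - derive Lf (g q0) (w.1, 0).
Proof.
move=> dL dg g1 hL.
have Ha i : is_derive q0 w (fun q : X => \sum_j M i j * q.2 0 j) (\sum_j M i j * w.2 0 j).
  have -> : (fun q : X => \sum_j M i j * q.2 0 j) = \sum_j (fun q : X => M i j * q.2 0 j).
    by rewrite fct_sumE.
  apply: is_derive_sum => j.
  have h : is_derive q0 w (piL j) (piL j w).
    have dp : differentiable (piL j) q0 by apply: linear_differentiable; exact: piL_cont.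
    apply: DeriveDef; first exact: diff_derivable.
    by rewrite deriveE // diff_lin //; exact: piL_cont.
  have h2 := @is_deriveM _ _ (cst (M i j)) (piL j) q0 w 0 (piL j w) (is_derive_cst _ _ _) h.
  apply: is_derive_eq h2 _.
  by rewrite /= scaler0 addr0.
have Hb i := is_derive_pi w i dg.
have dLg : differentiable (Lf \o g) q0 by exact: differentiable_comp.
have eD := congr1 (fun f => f w) (diff_comp dg dL).
have HL : is_derive q0 w (Lf \o g) ('d Lf (g q0) ('d g q0 w)).
  apply: DeriveDef; first by apply: diff_derivable; exact: differentiable_comp.
  rewrite deriveE; [exact: eD|exact: differentiable_comp].
have Hab i := is_deriveM (Ha i) (Hb i).
have Hs := is_derive_sum Hab.
have HK := is_deriveB Hs HL.
have -> : (fun q : X => \sum_i (\sum_j M i j * q.2 0 j) * (g q).2 0 i - Lf (g q)) =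
  (\sum_i ((fun q : X => \sum_j M i j * q.2 0 j) * (fun q => (g q).2 0 i))) - (Lf \o g).
  by apply: funext => q /=; rewrite fct_sumE.
case: HK => _ ->.
have g1d : ('d g q0 w).1 = w.1.
  pose F := fstL 'rV[R]_N 'rV[R]_N.
  have fc : continuous F := @fst_cont R 'rV[R]_N 'rV[R]_N.
  have dfst : forall x, differentiable F x.
    by move=> x; apply: linear_differentiable; exact: fc.
  have e : F \o g = F by apply/funext => q /=; exact: g1.
  have E1 := congr1 (fun f => f w) (diff_comp dg (dfst (g q0))).
  have E2 := congr1 (fun f => 'd f q0 w) e.
  have E3 := congr1 (fun f => (f \o 'd g q0) w) (@diff_lin R _ _ F (g q0) fc).
  have E4 := congr1 (fun f => f w) (@diff_lin R _ _ F q0 fc).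
  transitivity ((F \o 'd g q0) w); first by [].
  transitivity (('d F (g q0) \o 'd g q0) w); first exact: (esym E3).
  transitivity ('d (F \o g) q0 w); first exact: (esym E1).
  transitivity ('d F q0 w); first exact: E2.
  exact: E4.
rewrite (deriveE _ dL).
apply: dK_alg => //.
by move=> i; rewrite -(deriveE _ dL); exact: hL.
Qed.
End DK.

Section MXD.
Variables (R : realType) (N : nat).

Lemma entry_derive (f : R -> 'rV[R]_N) (t : R) j : derivable f t 1 ->
  is_derive t 1 (fun s => f s 0 j) (derive1 f t 0 j).
Proof.
move=> df; have dj := (derivable_mxP f t 1).1 df 0 j.
apply: (DeriveDef dj).
by rewrite derive1E derive_mx // mxE.
Qed.

Lemma entries_derive (f : R -> 'rV[R]_N) (t : R) (D : 'rV[R]_N) :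
  (forall j, is_derive t 1 (fun s => f s 0 j) (D 0 j)) -> is_derive t 1 f D.
Proof.
move=> H.
have df : derivable f t 1.
  by apply/derivable_mxP => i j; rewrite (ord1 i); case: (H j).
apply: (DeriveDef df).
rewrite derive_mx; last exact: df.
apply/matrixP => i j; rewrite (ord1 i) !mxE.
by case: (H j).
Qed.

Lemma mulmx_derive (f : R -> 'rV[R]_N) (A : 'M[R]_N) (t : R) i : derivable f t 1 ->
  is_derive t 1 (fun s => (f s *m A) 0 i) ((derive1 f t *m A) 0 i).
Proof.
move=> df.
have e : (fun s => (f s *m A) 0 i) = \sum_k (fun s => f s 0 k * A k i).
  by apply/funext => s; rewrite fct_sumE mxE.
rewrite e mxE; apply: is_derive_sum => k.
have h := is_deriveM (entry_derive k df) (is_derive_cst (A k i) t 1).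
apply: is_derive_eq h _.
by rewrite scaler0 add0r mulrC.
Qed.
End MXD.

End Helpers.
Import Helpers.

Local Open Scope classical_set_scope.

Theorem mainTheorem7 (R : realType) (V W : lmodType R) (N : nat)
  (ipV : V -> V -> R) (ipW : W -> W -> R) (d : {linear V -> W})
  (v : 'I_N -> V)
  (Lint : R -> V -> V -> W -> R)
  (d2 d3 : R -> V -> V -> W -> V) (d4 : R -> V -> V -> W -> W)
  (vinv : R -> 'rV[R]_N -> 'rV[R]_N -> 'rV[R]_N)
  (I : set R) :
  inner_product ipV -> inner_product ipW -> lin_indep v ->
  (* d2, d3, d4 are the L^2 Riesz representatives of the first variation *)
  (forall t phi phid psi (a1 a2 : V) (a3 : W),
     is_derive (0 : R) (1 : R)
       (fun s => Lint t (phi + s *: a1) (phid + s *: a2) (psi + s *: a3))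
       (ipV (d2 t phi phid psi) a1 + ipV (d3 t phi phid psi) a2
        + ipW (d4 t phi phid psi) a3)) ->
  (* L_h is differentiable in (phi, phidot) *)
  (forall t (p : 'rV[R]_N * 'rV[R]_N),
     differentiable (fun q : 'rV[R]_N * 'rV[R]_N => Lh Lint d v t q.1 q.2) p) ->
  (* hyperregularity: the Legendre transform is a diffeomorphism, with inverse
     (phi, pi) |-> (phi, vinv t phi pi) *)
  (forall t, diffeo (legendre ipV Lint d v t)
                    (fun q => (q.1, vinv t q.1 q.2))) ->
  is_interval I -> open I ->
  forall phi pi : R -> 'rV[R]_N,
    hamilton_eqs ipV Lint d v vinv I phi pi <->
    (euler_lagrange ipV ipW d2 d3 d4 d v I phi /\
     forall t, I t -> pi t = momentum ipV Lint d v t (phi t) (derive1 phi t)).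
Proof.
move=> hV hW li hriesz hLd hdiff _ oI phi pi.
set M := mass ipV v.
have Mu : M \in unitmx := mass_unit hV li.
have Ms : M^T = M := mass_sym hV v.
have Msym : forall i j, M i j = M j i.
  by move=> i j; rewrite -{1}Ms mxE.
have canc1 : forall t phi0 pi0, momentum ipV Lint d v t phi0 (vinv t phi0 pi0) = pi0.
  move=> t phi0 pi0; case: (hdiff t) => _ c2 _ _.
  exact: (congr1 snd (c2 (phi0, pi0))).
have canc2 : forall t phi0 phid, vinv t phi0 (momentum ipV Lint d v t phi0 phid) = phid.
  move=> t phi0 phid; case: (hdiff t) => c1 _ _ _.
  exact: (congr1 snd (c1 (phi0, phid))).
have Mom : forall t phi0 phid,
    momentum ipV Lint d v t phi0 phid *m M = \row_i pd (Lh Lint d v t phi0) phid i.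
  move=> t phi0 phid; rewrite /momentum -/M Ms mulmxKV //.
have sdel : forall (a : 'I_N -> R) j, \sum_k a k * (delta_mx 0 j : 'rV[R]_N) 0 k = a j.
  move=> a j; rewrite (bigD1 j) //= mxE !eqxx mulr1 big1 ?addr0 // => k /negbTE kj.
  by rewrite mxE kj andbF mulr0.
have HF : forall t phi0 pi0,
   (forall j, pd (Hh ipV Lint d v vinv t phi0) pi0 j = (vinv t phi0 pi0 *m M) 0 j) /\
   (forall j, pd (fun x => Hh ipV Lint d v vinv t x pi0) phi0 j
              = - pd (fun x => Lh Lint d v t x (vinv t phi0 pi0)) phi0 j).
  move=> t phi0 pi0.
  pose Lf := fun q : 'rV[R]_N * 'rV[R]_N => Lh Lint d v t q.1 q.2.
  pose g := fun q : 'rV[R]_N * 'rV[R]_N => (q.1, vinv t q.1 q.2).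
  pose q0 : ('rV[R]_N * 'rV[R]_N)%type := (phi0, pi0).
  have dL : differentiable Lf (g q0) := hLd t _.
  have dg : differentiable g q0 by case: (hdiff t) => _ _ _; apply.
  have g1 : forall q, (g q).1 = q.1 by [].
  have hL : forall i, derive Lf (g q0) (0, delta_mx 0 i) = \sum_j M i j * q0.2 0 j.
    move=> i.
    transitivity (pd (Lh Lint d v t phi0) (vinv t phi0 pi0) i).
      rewrite /pd (derive_line Lf) (derive_line (Lh Lint d v t phi0)).
      suff -> : (fun h : R => Lf (h *: ((0 : 'rV[R]_N), (delta_mx 0 i : 'rV[R]_N)) + g q0)) =
                (fun h : R => Lh Lint d v t phi0 (h *: delta_mx 0 i + vinv t phi0 pi0)) by [].
      by apply/funext => h; rewrite scp_pair adp_pair scaler0 add0r.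
    have := congr1 (fun m : 'rV[R]_N => m 0 i) (Mom t phi0 (vinv t phi0 pi0)).
    rewrite canc1 mxE => <-; rewrite mxE; apply: eq_bigr => j _.
    by rewrite mulrC Msym.
  have dKw := fun w => dK w dL dg g1 hL.
  pose K := (fun q : ('rV[R]_N * 'rV[R]_N)%type =>
     \sum_i (\sum_j M i j * q.2 0 j) * (g q).2 0 i - Lf (g q)).
  split => j.
  - transitivity (derive K q0 ((0 : 'rV[R]_N), (delta_mx 0 j : 'rV[R]_N))).
      rewrite /pd (derive_line (Hh ipV Lint d v vinv t phi0)) (derive_line K).
      suff -> : (fun h : R => K (h *: ((0 : 'rV[R]_N), (delta_mx 0 j : 'rV[R]_N)) + q0)) =
                (fun h : R => Hh ipV Lint d v vinv t phi0 (h *: delta_mx 0 j + pi0)) by [].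
      by apply/funext => h; rewrite scp_pair adp_pair scaler0 add0r.
    rewrite dKw /=.
    rewrite (_ : ((0 : 'rV[R]_N), (0 : 'rV[R]_N)) = 0) // derive0 subr0.
    rewrite mxE; apply: eq_bigr => i _.
    by rewrite sdel mulrC.
  - transitivity (derive K q0 ((delta_mx 0 j : 'rV[R]_N), (0 : 'rV[R]_N))).
      rewrite /pd (derive_line (fun x => Hh ipV Lint d v vinv t x pi0)) (derive_line K).
      suff -> : (fun h : R => K (h *: ((delta_mx 0 j : 'rV[R]_N), (0 : 'rV[R]_N)) + q0)) =
                (fun h : R => Hh ipV Lint d v vinv t (h *: delta_mx 0 j + phi0) pi0) by [].
      by apply/funext => h; rewrite scp_pair adp_pair scaler0 add0r.
    rewrite dKw /= big1 ?sub0r; last first.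
      by move=> i _; rewrite big1 ?mul0r // => k _; rewrite !mxE mulr0.
    congr (- _).
    rewrite /pd (derive_line Lf) (derive_line (fun x => Lh Lint d v t x (vinv t phi0 pi0))).
    suff -> : (fun h : R => Lf (h *: ((delta_mx 0 j : 'rV[R]_N), (0 : 'rV[R]_N)) + g q0)) =
              (fun h : R => Lh Lint d v t (h *: delta_mx 0 j + phi0) (vinv t phi0 pi0)) by [].
    by apply/funext => h; rewrite scp_pair adp_pair scaler0 add0r.
have Mom2 : forall t phi0 phid, momentum ipV Lint d v t phi0 phid *m M =
    \row_i ipV (d3 t (comb v phi0) (comb v phid) (comb (fun j => d (v j)) phi0)) (v i).
  move=> t phi0 phid; rewrite Mom; apply/rowP => i; rewrite !mxE.
  exact: (pd_phid d v hV hW hriesz).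
have nI : forall t, I t -> \forall s \near t, I s.
  by move=> t It; apply: open_nbhs_nbhs; split.
have Minj : forall x y : 'rV[R]_N, (forall j, (x *m M) 0 j = (y *m M) 0 j) -> x = y.
  move=> x y h; rewrite -(mulmxK Mu x) -(mulmxK Mu y); congr (_ *m _).
  by apply/rowP => j; rewrite h.
have ipc : forall (X : V) (c : 'rV[R]_N), ipV X (comb v c) = \sum_i c 0 i * ipV X (v i).
  by move=> X c; rewrite /comb (ip_sumr hV).
have dcomb : forall c : 'rV[R]_N, d (comb v c) = \sum_i c 0 i *: d (v i).
  by move=> c; rewrite /comb linear_sum; apply: eq_bigr => i _; rewrite linearZ.
split.
- move=> HE.
  have phidot : forall t, I t -> derive1 phi t = vinv t (phi t) (pi t).
    move=> t It; case: (HE t It) => _ _ e1 _; apply: Minj => j.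
    by rewrite e1; case: (HF t (phi t) (pi t)) => ->.
  have pimom : forall t, I t -> pi t = momentum ipV Lint d v t (phi t) (derive1 phi t).
    by move=> t It; rewrite phidot // canc1.
  split; last exact: pimom.
  move=> t It; case: (HE t It) => dphi dpi e1 e2; split => // c /=.
  pose G := fun s : R => \sum_i c 0 i * (pi s *m M) 0 i.
  apply: (@near_eq_is_derive _ _ _ G).
    apply: filterS (nI t It) => s Is.
    rewrite /G ipc (pimom s Is) Mom2; apply: eq_bigr => i _.
    by rewrite mxE.
  have h2 i := is_deriveM (is_derive_cst (c 0 i) t 1) (mulmx_derive M i dpi).
  have h3 := is_derive_sum h2.
  rewrite (_ : G = \sum_i (cst (c 0 i) * (fun s => (pi s *m M) 0 i))); last first.
    by apply/funext => s; rewrite fct_sumE.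
  apply: is_derive_eq h3 _.
  rewrite ipc dcomb (ip_sumr hW) -big_split; apply: eq_bigr => i _ /=.
  rewrite scaler0 addr0 -Ms e2 (proj2 (HF t (phi t) (pi t)) i) opprK -phidot //.
  rewrite (pd_phi d v hV hriesz).
  have sm : forall a b : R, a *: b = a * b by [].
  by rewrite sm mulrDr.
- move=> [HEL pimom] t It.
  case: (HEL t It) => dphi Hc.
  have phidot : derive1 phi t = vinv t (phi t) (pi t) by rewrite pimom // canc2.
  pose P := fun s : R => \row_i ipV (d3 s (comb v (phi s)) (comb v (derive1 phi s))
                         (comb (fun j => d (v j)) (phi s))) (v i).
  pose E := \row_i (ipV (d2 t (comb v (phi t)) (comb v (derive1 phi t))
                         (comb (fun j => d (v j)) (phi t))) (v i)
            + ipW (d4 t (comb v (phi t)) (comb v (derive1 phi t))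
                         (comb (fun j => d (v j)) (phi t))) (d (v i))).
  have HP : is_derive t 1 P E.
    apply: entries_derive => j.
    have e : (fun s => P s 0 j) = (fun s => ipV (d3 s (comb v (phi s)) (comb v (derive1 phi s))
                         (comb (fun j => d (v j)) (phi s))) (v j)).
      by apply/funext => s; rewrite mxE.
    rewrite e mxE.
    by move: (Hc (delta_mx 0 j)) => /=; rewrite comb_delta.
  have [dP vP] := HP.
  have HQ : is_derive t 1 (fun s => P s *m invmx M) (E *m invmx M).
    apply: entries_derive => j.
    have := mulmx_derive (invmx M) j dP.
    by rewrite derive1E vP.
  have Hpi : is_derive t 1 pi (E *m invmx M).
    apply: (@near_eq_is_derive _ _ _ (fun s => P s *m invmx M)) => //.
    apply: filterS (nI t It) => s Is.
    by rewrite pimom // /P -Mom2 mulmxK.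
  have [dpi vpi] := Hpi.
  split => // j.
  + by rewrite (proj1 (HF t (phi t) (pi t)) j) phidot.
  + rewrite (proj2 (HF t (phi t) (pi t)) j) opprK -phidot (pd_phi d v hV hriesz).
    by rewrite derive1E vpi Ms mulmxKV // mxE.
Qed.
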